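(* Let $H$ be a subgroup of a direct product $H_1\times\dots\times H_r$ of finite groups, and let $g\in H$ be an involution. For $i=1,\dots,r$ let $L_i$ be the projection of $H$ to $H_i\times H_{i+1}\times\dots\times H_r$ (so $L_1=H$), and let $g_i$ be the image of $g$ in $L_i$. For $i=1,\dots,r-1$ let $\psi_i:L_i\to L_{i+1}$ be the canonical projection and $T_i=\ker\psi_i$; set $T_r=L_r$. Suppose that there is $k\leq r$ such that $|T_i|$ is odd for all $i<k$ and $|T_k|$ is even; if $k<r$ suppose further that $g_{k+1}=1$. Let $P$ be a Sylow $2$-subgroup of $T_k$. Then $$|H:C_H(g)|=\left(\prod_{i=1}^{k}|T_i:C_{T_i}(g_i)|\right)\frac{|(g_k)^{L_k}\cap P|}{|(g_k)^{T_k}\cap P|}.$$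
   Context: $x^K$ denotes the set of $K$-conjugates of $x$; $C_{T_i}(g_i)$ is the centralizer in the normal subgroup $T_i\trianglelefteq L_i$ of $g_i\in L_i$. *)

(* Defs.v *)
From HB Require Import structures.
From mathcomp Require Import all_boot all_order all_algebra all_fingroup all_solvable.
Set Implicit Arguments.
Unset Strict Implicit.
Unset Printing Implicit Defensive.

Local Open Scope group_scope.

(* The direct product H_1 x ... x H_r is modelled as an internal direct
   product of subgroups Hs 1, ..., Hs r of a finite group gT. *)

Definition headp (gT : finGroupType) (Hs : nat -> {group gT}) (i : nat) : {set gT} :=
  (\prod_(1 <= j < i) Hs j)%g.

Definition tailp (gT : finGroupType) (Hs : nat -> {group gT}) (r i : nat) : {set gT} :=
  (\prod_(i <= j < r.+1) Hs j)%g.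

Definition proj (gT : finGroupType) (Hs : nat -> {group gT}) (r i : nat) (x : gT) : gT :=
  remgr (headp Hs i) (tailp Hs r i) x.

Definition Lsub (gT : finGroupType) (Hs : nat -> {group gT}) (r : nat)
    (H : {set gT}) (i : nat) : {set gT} :=
  proj Hs r i @: H.

Definition Tker (gT : finGroupType) (Hs : nat -> {group gT}) (r : nat)
    (H : {set gT}) (i : nat) : {set gT} :=
  if (i < r)%N then [set x in Lsub Hs r H i | proj Hs r i.+1 x == 1]
  else Lsub Hs r H i.

(* Main.v *)
Require Import Defs.
From HB Require Import structures.
From mathcomp Require Import all_boot all_order all_algebra all_fingroup all_solvable.
Import GRing.Theory.
Local Open Scope group_scope.

Lemma inv_sq {gT : finGroupType} {g : gT} : g ^+ 2 = 1 -> g^-1 = g.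
Proof. by move=> g2; apply/eqP; rewrite eq_invg_mul -expg2 g2. Qed.

Lemma conj_fix_cent {gT : finGroupType} {g y : gT} : g ^ y = g -> y \in 'C[g].
Proof. by move=> h; apply/cent1P; rewrite /commute -{1}h /conjg !mulgA mulgV mul1g. Qed.

Lemma step_pre {gT : finGroupType} {L : {group gT}} {f : {morphism L >-> gT}} {g : gT} :
  g \in L -> g ^+ 2 = 1 -> odd #|'ker f| ->
  f @*^-1 'C_(f @* L)[f g] = 'C_L[g] * 'ker f.
Proof.
move=> Lg g2 oK; have gV := inv_sq g2.
apply/eqP; rewrite eqEsubset; apply/andP; split; last first.
  apply/subsetP=> _ /mulsgP[c k /setIP[Lc /cent1P cg] Kk ->].
  have Lk : k \in L by case/morphpreP: Kk.
  apply/morphpreP; split; first by rewrite groupM.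
  rewrite morphM // (mker Kk) mulg1 inE mem_morphim //=.
  by apply/cent1P; rewrite /commute -!morphM // cg.
apply/subsetP=> x /morphpreP[Lx /setIP[_ /cent1P cx]].
pose t := g^-1 * g ^ x.
have Lt : t \in L by rewrite groupM ?groupV // groupJ.
have Kt : t \in 'ker f.
  apply/morphpreP; split=> //; rewrite inE morphM ?groupV ?groupJ //.
  by rewrite morphJ // /conjg -cx mulKg morphV // mulVg.
have tg : t ^ g = t^-1.
  rewrite /t gV {1}/conjg gV !mulgA -expg2 g2 mul1g invMg.
  by rewrite !invMg invgK gV !mulgA.
pose n := #[t].
have on : odd n by apply: dvdn_odd (order_dvdG Kt) oK.
pose u := t ^+ (n.+1)./2.
have u2 : u ^+ 2 = t.
  rewrite /u -expgM.
  have -> : ((n.+1)./2 * 2 = n.+1)%N.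
    by rewrite muln2 -{2}(odd_double_half n.+1) /= on.
  by rewrite expgSr expg_order mul1g.
have Ku : u \in 'ker f by rewrite groupX.
have Lu : u \in L by case/morphpreP: Ku.
have ug : u ^ g = u^-1 by rewrite /u conjXg tg expVgn.
have gu : g ^ u = g ^ x.
  rewrite {1}/conjg -ug /conjg gV -!mulgA (mulgA g g) -expg2 g2 mul1g.
  by rewrite -expg2 u2 /t mulKVg /conjg mulgA.
have -> : x = (x * u^-1) * u by rewrite mulgKV.
apply: mem_mulg => //; rewrite inE groupM ?groupV //=.
have h : g ^ (x * u^-1) = g by rewrite conjgM -gu conjgK.
exact: conj_fix_cent h.
Qed.

Lemma arith_step (c ck k r b a d CK l fl : nat) : (0 < c -> 0 < ck ->
  c * a = l -> l = k * fl -> r * b = fl -> CK = k * r -> c * k = CK * ck ->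
  ck * d = k -> a = d * b)%N.
Proof.
move=> c0 ck0 hC cL hR cM mul hK.
apply/eqP; rewrite -(eqn_pmul2l c0) -(eqn_pmul2l ck0) hC cL -hR.
rewrite (mulnA k r b) -cM mulnA (mulnC ck CK) -mul -hK.
by rewrite !mulnA (mulnC ck c).
Qed.

Lemma step_count {gT : finGroupType} (L : {group gT}) (f : {morphism L >-> gT}) (g : gT) :
  g \in L -> g ^+ 2 = 1 -> odd #|'ker f| ->
  #|L : 'C_L[g]| = (#|'ker f : 'C_('ker f)[g]| * #|f @* L : 'C_(f @* L)[f g]|)%N.
Proof.
move=> Lg g2 oK; have defM := step_pre Lg g2 oK.
have sKL : 'ker f \subset L by apply: subsetIl.
have cM : #|'C_L[g] * 'ker f| = (#|'ker f| * #|'C_(f @* L)[f g]|)%N.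
  by rewrite -defM card_morphpre // subsetIl.
have cL : #|L| = (#|'ker f| * #|f @* L|)%N.
  by rewrite -card_morphpre // morphimGK.
have hC := Lagrange (subsetIl L 'C[g]).
have hR := Lagrange (subsetIl (f @* L) 'C[f g]).
have hK := Lagrange (subsetIl ('ker f) 'C[g]).
have mul := mul_cardG 'C_L[g] ('ker f).
have eCK : 'C_L[g] :&: 'ker f = 'C_('ker f)[g].
  by rewrite setIC setIA (setIidPl sKL).
rewrite eCK in mul.
by apply: (@arith_step _ _ _ _ _ _ _ _ _ _ (cardG_gt0 _) (cardG_gt0 _) hC cL hR cM mul hK).
Qed.

Lemma card_setI_sum {T : finType} (A B : {set T}) :
  #|A :&: B| = (\sum_(z in B) (z \in A))%N.
Proof.
rewrite -sum1_card big_mkcond [RHS]big_mkcond /=.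
by apply: eq_bigr => z _; rewrite inE; case: (z \in A); case: (z \in B).
Qed.

Lemma classJ_norm {gT : finGroupType} (T : {group gT}) (g l : gT) :
  l \in 'N(T) -> (g ^ l) ^: T = (g ^: T) :^ l.
Proof.
move=> nTl; apply/setP=> y; apply/imsetP/idP.
  case=> t Tt ->.
  have -> : (g ^ l) ^ t = (g ^ (t ^ l^-1)) ^ l.
    by rewrite -!conjgM; congr (g ^ _); rewrite /conjg invgK mulgA mulgKV.
  by rewrite mem_conjg conjgK memJ_class // memJ_norm // groupV.
rewrite mem_conjg => /imsetP[t Tt et].
exists (t ^ l); first by rewrite memJ_norm.
rewrite -(conjgKV l y) et -!conjgM; congr (g ^ _).
by rewrite /conjg mulKVg.
Qed.

Lemma class_count {gT : finGroupType} (L T P : {group gT}) (g : gT) (p : nat) :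
  T <| L -> P \in 'Syl_p(T) ->
  (#|g ^: L| * #|g ^: T :&: P| = #|g ^: T| * #|g ^: L :&: P|)%N.
Proof.
move=> /andP[sTL nTL] sylP.
have sylP' : p.-Sylow(T) P by move: sylP; rewrite inE.
set X := g ^: L.
have clX : forall z y, z \in X -> y \in z ^: T -> y \in X.
  move=> z y /imsetP[l Ll ->] /imsetP[t Tt ->].
  by rewrite -conjgM memJ_class // groupM // (subsetP sTL).
have cardX : forall z, z \in X -> #|z ^: T| = #|g ^: T|.
  move=> z /imsetP[l Ll ->].
  by rewrite classJ_norm ?cardJg // (subsetP nTL).
have capX : forall y, y \in X -> #|y ^: T :&: P| = #|g ^: T :&: P|.
  move=> y /imsetP[l Ll ->].
  have nl : l \in 'N(T) by apply: (subsetP nTL).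
  rewrite classJ_norm //.
  have -> : (g ^: T) :^ l :&: P = ((g ^: T) :&: P :^ l^-1) :^ l.
    by rewrite conjIg conjsgKV.
  rewrite cardJg.
  have sylQ : p.-Sylow(T) (P :^ l^-1)%G by rewrite pHallJnorm // groupV.
  have [t Tt ->] := Sylow_trans sylP' sylQ.
  have -> : (g ^: T) :&: P :^ t = ((g ^: T) :^ t^-1 :&: P) :^ t.
    by rewrite conjIg conjsgKV.
  by rewrite cardJg classGidr // groupV.
have e1 : (\sum_(y in X) #|y ^: T :&: P| = #|X| * #|g ^: T :&: P|)%N.
  by rewrite -sum_nat_const; apply: eq_bigr => y Xy; rewrite capX.
have e2 : (\sum_(y in X) #|y ^: T :&: P| = #|X :&: P| * #|g ^: T|)%N.
  under eq_bigr => y _ do rewrite card_setI_sum.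
  rewrite exchange_big /= card_setI_sum big_distrl /=.
  apply: eq_bigr => z Pz.
  under eq_bigr => y _ do rewrite class_sym.
  rewrite -card_setI_sum.
  case Xz: (z \in X); last first.
    rewrite mul0n; apply/eqP; rewrite cards_eq0; apply/eqP/setP=> y.
    rewrite !inE; apply/andP=> -[zy Xy]; move: Xz.
    by rewrite (clX y z Xy) // class_sym.
  have -> : z ^: T :&: X = z ^: T.
    by apply/setP=> y; rewrite inE; apply/andb_idr; apply: clX.
  by rewrite mul1n -(cardX z Xz).
have E := etrans (esym e1) e2.
by rewrite E mulnC.
Qed.

Lemma split_dprod {gT : finGroupType} {r : nat} {Hs : nat -> {group gT}} {G : {group gT}} (i : nat) :
  \big[dprod/1]_(1 <= j < r.+1) Hs j = G -> (1 <= i <= r.+1)%N ->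
  exists K L : {group gT}, [/\ headp Hs i = K, tailp Hs r i = L & K \x L = G].
Proof.
move=> defG /andP[i1 ir].
rewrite (big_cat_nat i1 ir) /= in defG.
have [[K L eK eL] _ _ _] := dprodP defG.
exists K, L; split; last by rewrite -eK -eL.
- by rewrite /headp (bigdprodW eK).
- by rewrite /tailp (bigdprodW eL).
Qed.

Lemma proj_morph {gT : finGroupType} {r : nat} {Hs : nat -> {group gT}} {G : {group gT}} (i : nat) :
  \big[dprod/1]_(1 <= j < r.+1) Hs j = G -> (1 <= i <= r.+1)%N ->
  {in G &, {morph proj Hs r i : x y / x * y}}.
Proof.
move=> defG hi; have [K [L [eK eL dKL]]] := split_dprod i defG hi.
rewrite /proj eK eL; have [_ eKL _ tKL] := dprodP dKL.
have [nK _] := dprod_normal2 dKL.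
by apply: remgrM => //; apply/complP.
Qed.

Lemma proj_mem {gT : finGroupType} {r : nat} {Hs : nat -> {group gT}} {G : {group gT}} (i : nat) x :
  \big[dprod/1]_(1 <= j < r.+1) Hs j = G -> (1 <= i <= r.+1)%N ->
  x \in G -> proj Hs r i x \in G.
Proof.
move=> defG hi Gx; have [K [L [eK eL dKL]]] := split_dprod i defG hi.
have [_ eKL _ tKL] := dprodP dKL.
rewrite /proj eK eL; have : remgr K L x \in L by rewrite mem_remgr // eKL.
by apply: subsetP; rewrite -eKL mulG_subr.
Qed.

Lemma proj1_id {gT : finGroupType} {r : nat} {Hs : nat -> {group gT}} {G : {group gT}} x :
  \big[dprod/1]_(1 <= j < r.+1) Hs j = G -> x \in G -> proj Hs r 1 x = x.
Proof.
move=> defG Gx; have [K [L [eK eL dKL]]] := split_dprod 1 defG isT.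
have [_ eKL _ tKL] := dprodP dKL.
have K1 : K :=: 1 by rewrite -eK /headp big_geq.
rewrite /proj eK eL remgr_id //.
by rewrite -eKL K1 mul1g in Gx.
Qed.

Lemma headp_sub {gT : finGroupType} (Hs : nat -> {group gT}) (i : nat) :
  (1 <= i)%N -> headp Hs i \subset headp Hs i.+1.
Proof.
move=> i1; rewrite /headp big_nat_recr //=.
by apply: mulG_subl.
Qed.

Lemma proj_comp {gT : finGroupType} {r : nat} {Hs : nat -> {group gT}} {G : {group gT}} (i : nat) x :
  \big[dprod/1]_(1 <= j < r.+1) Hs j = G -> (1 <= i <= r)%N ->
  x \in G -> proj Hs r i.+1 (proj Hs r i x) = proj Hs r i.+1 x.
Proof.
move=> defG /andP[i1 ir] Gx.
have hi : (1 <= i <= r.+1)%N by rewrite i1 ltnW.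
have hi1 : (1 <= i.+1 <= r.+1)%N by apply/andP; split; last exact: ir.
have [K [L [eK eL dKL]]] := split_dprod i defG hi.
have [_ eKL _ tKL] := dprodP dKL.
have KLx : x \in K * L by rewrite eKL.
have Gd : divgr K L x \in G by rewrite -eKL (subsetP (mulG_subl _ _)) ?mem_divgr.
have Gr : remgr K L x \in G by rewrite -eKL (subsetP (mulG_subr _ _)) ?mem_remgr.
rewrite {2}(divgr_eq K L x) (proj_morph i.+1 defG hi1) // /proj eK eL.
have [K' [L' [eK' eL' _]]] := split_dprod i.+1 defG hi1.
have sKK' : K \subset K' by rewrite -eK -eK' headp_sub.
rewrite eK' eL' [X in _ = X * _]remgr1 ?mul1g //.
by rewrite (subsetP sKK') // mem_divgr.
Qed.

Local Open Scope ring_scope.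
Lemma rat_final (b1 A ak bk c e : nat) : (0 < c)%N -> b1 = (A * bk)%N ->
  (bk * c = ak * e)%N ->
  ((b1%:R : rat) = (A * ak)%:R * (e%:R / c%:R))%R.
Proof.
move=> c0 e1 e2; have cn : (c%:R : rat) != 0%R by rewrite Num.Theory.pnatr_eq0 -lt0n.
rewrite GRing.mulrA -(GRing.mulfK cn b1%:R); congr (_ / _).
by rewrite -!GRing.natrM e1 -mulnA e2 mulnA.
Qed.
Local Close Scope ring_scope.
Local Open Scope group_scope.

Lemma step_fun {gT : finGroupType} (L : {group gT}) (f : gT -> gT)
    (fM : {in L &, {morph f : x y / x * y}}) (g : gT) :
  g \in L -> g ^+ 2 = 1 -> odd #|[set x in L | f x == 1]| ->
  #|L : 'C_L[g]| = muln #|[set x in L | f x == 1] : 'C_([set x in L | f x == 1])[g]|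
                     #|f @: L : 'C_(f @: L)[f g]|.
Proof.
pose F : {morphism L >-> gT} := Morphism fM.
have eK : 'ker F = [set x in L | f x == 1].
  by apply/setP=> x; rewrite !inE.
have eI : F @* L = f @: L by rewrite morphimEdom.
rewrite -eK -eI; exact: step_count.
Qed.

Lemma tker_group {gT : finGroupType} (L : {group gT}) (f : gT -> gT)
    (fM : {in L &, {morph f : x y / x * y}}) :
  exists T : {group gT}, [set x in L | f x == 1] = T /\ T <| L.
Proof.
pose F : {morphism L >-> gT} := Morphism fM.
have eK : 'ker F = [set x in L | f x == 1].
  by apply/setP=> x; rewrite !inE.
exists ('ker F)%G; split; first by rewrite -eK.
exact: ker_normal.
Qed.

Theorem lemma2p3 (gT : finGroupType) (r : nat) (Hs : nat -> {group gT})
    (G H : {group gT}) (g : gT) (k : nat) (P : {group gT}) :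
  \big[dprod/1]_(1 <= j < r.+1) Hs j = G ->
  H \subset G ->
  g \in H -> #[g] = 2%N ->
  (1 <= k <= r)%N ->
  (forall i : nat, (1 <= i < k)%N -> odd #|Tker Hs r H i|) ->
  ~~ odd #|Tker Hs r H k| ->
  ((k < r)%N -> proj Hs r k.+1 g = 1) ->
  P \in 'Syl_2(Tker Hs r H k) ->
  ((#|H : 'C_H[g]|)%:R : rat)%R =
    ((\prod_(1 <= i < k.+1)
        (#|Tker Hs r H i : 'C_(Tker Hs r H i)[proj Hs r i g]|)%:R)
    * ((#|(proj Hs r k g ^: Lsub Hs r H k) :&: P|)%:R
       / (#|(proj Hs r k g ^: Tker Hs r H k) :&: P|)%:R))%R.
Proof.
move=> defG sHG Hg og /andP[k1 kr] oddT _ gk1 sylP.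
have hi : forall i, (1 <= i <= r)%N -> (1 <= i <= r.+1)%N.
  by move=> i /andP[a b]; rewrite a leqW.
have g2 : g ^+ 2 = 1 by rewrite -og expg_order.
have Gg : g \in G := subsetP sHG g Hg.
have Lgrp : forall i, (1 <= i <= r.+1)%N ->
    exists Lg : {group gT}, Lsub Hs r H i = Lg /\ Lg \subset G.
  move=> i h; pose F : {morphism G >-> gT} := Morphism (proj_morph i defG h).
  exists (F @* H)%G; split; first by rewrite /Lsub /= morphimEsub.
  apply/subsetP => _ /morphimP[x Gx Hx ->]; exact: proj_mem.
have gi2 : forall i, (1 <= i <= r.+1)%N -> (proj Hs r i g) ^+ 2 = 1.
  move=> i h; pose F : {morphism G >-> gT} := Morphism (proj_morph i defG h).
  by rewrite -[proj Hs r i]/(F : gT -> gT) -morphX // g2 morph1.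
have giL : forall i, proj Hs r i g \in Lsub Hs r H i.
  by move=> i; apply: imset_f.
have Lnext : forall i, (1 <= i <= r)%N ->
    proj Hs r i.+1 @: Lsub Hs r H i = Lsub Hs r H i.+1.
  move=> i h; rewrite /Lsub -imset_comp; apply: eq_in_imset => x Hx /=.
  exact: proj_comp (subsetP sHG x Hx).
have morphL : forall i (Lg : {group gT}), (1 <= i <= r.+1)%N -> Lg \subset G ->
    {in Lg &, {morph proj Hs r i : x y / x * y}}.
  move=> i Lg h sLG x y Lx Ly; apply: (proj_morph i defG h); exact: (subsetP sLG).
pose a i := #|Tker Hs r H i : 'C_(Tker Hs r H i)[proj Hs r i g]|.
pose b i := #|Lsub Hs r H i : 'C_(Lsub Hs r H i)[proj Hs r i g]|.
have stepE : forall i, (1 <= i < k)%N -> b i = (a i * b i.+1)%N.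
  move=> i /andP[i1 ik]; have ir : (i < r)%N := leq_trans ik kr.
  have hir : (1 <= i <= r)%N by rewrite i1 ltnW.
  have hi1 : (1 <= i.+1 <= r.+1)%N by apply/andP; split => //; rewrite ltnS ltnW.
  have [Lg [eL sLG]] := Lgrp i (hi i hir).
  have eT : Tker Hs r H i = [set x in Lg | proj Hs r i.+1 x == 1].
    by rewrite /Tker ir eL.
  have S := @step_fun _ Lg _ (morphL i.+1 Lg hi1 sLG) (proj Hs r i g).
  rewrite -eT -eL Lnext // (proj_comp i g defG hir Gg) in S.
  apply: S; [exact: giL | exact: gi2 (hi i hir) | by rewrite oddT // i1].
have ind : forall j, (1 <= j <= k)%N -> b 1%N = (\prod_(1 <= i < j) a i * b j)%N.
  elim=> [|j IH] // /andP[_ jk].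
  case: j IH jk => [|j] IH jk; first by rewrite big_geq // mul1n.
  rewrite IH; last by apply/andP; split => //; apply: ltnW.
  by rewrite [in RHS]big_nat_recr //= -mulnA -stepE // jk.
have hk : (1 <= k <= r.+1)%N by rewrite k1 leqW.
have hkr : (1 <= k <= r)%N by rewrite k1 kr.
have [Lk [eLk sLkG]] := Lgrp k hk.
have [Tk [eTk nTk]] : exists Tk : {group gT}, Tker Hs r H k = Tk /\ Tk <| Lk.
  case: (ltnP k r) => kr'.
    have hk1 : (1 <= k.+1 <= r.+1)%N by apply/andP; split => //; rewrite ltnS ltnW.
    have [Tk [eT nT]] := @tker_group _ Lk _ (morphL k.+1 Lk hk1 sLkG).
    by exists Tk; rewrite /Tker kr' eLk.
  exists Lk; split; last exact: normal_refl.
  by rewrite /Tker ltnNge kr' /= eLk.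
have gkT : proj Hs r k g \in Tk.
  rewrite -eTk /Tker; case: ifP => kr'; last exact: giL.
  by rewrite inE giL /= (proj_comp k g defG hkr Gg) gk1.
have sylP' : P \in 'Syl_2(Tk) by rewrite -eTk.
have c0 : (0 < #|proj Hs r k g ^: Tk :&: P|)%N.
  have sylP2 : 2.-Sylow(Tk) P by move: sylP'; rewrite inE.
  have p2 : 2.-group <[proj Hs r k g]>.
    apply: pnat_dvd (pnat_id (isT : prime 2)).
    rewrite -og; pose F : {morphism G >-> gT} := Morphism (proj_morph k defG hk).
    exact: (morph_order F Gg).
  have sgT : <[proj Hs r k g]> \subset Tk by rewrite cycle_subG.
  have [t Tt sP] := Sylow_Jsub sylP2 sgT p2.
  apply/card_gt0P; exists (proj Hs r k g ^ t); rewrite inE memJ_class //=.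
  by apply: (subsetP sP); rewrite memJ_conjg cycle_id.
have cc := class_count Lk Tk P (proj Hs r k g) 2 nTk sylP'.
have key : (b k * #|proj Hs r k g ^: Tk :&: P| = a k * #|proj Hs r k g ^: Lk :&: P|)%N.
  by rewrite /a /b eLk eTk !index_cent1.
have L1 : Lsub Hs r H 1 = H.
  rewrite /Lsub -[RHS]imset_id; apply: eq_in_imset => x Hx.
  exact: proj1_id x defG (subsetP sHG x Hx).
have b1 : #|H : 'C_H[g]| = (\prod_(1 <= i < k) a i * b k)%N.
  rewrite -ind; last by rewrite k1 leqnn.
  by rewrite /b (proj1_id g defG Gg) L1.
rewrite eLk eTk -GRing.natr_prod big_nat_recr //=.
exact: (@rat_final _ _ _ _ _ _ c0 b1 key).
Qed.
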